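(* For every $d\ge1$, the maximum of the index $[D_{2d}:L]$, over all sublattices $L$ of $D_{2d}$ generated by $2d$ linearly independent roots of $D_{2d}$, equals $2^{d-1}$.
   Context: $D_n=\{x\in\mathbb Z^n:\sum_ix_i\equiv0\pmod2\}$ with the standard inner product; its roots are its vectors of squared length $2$, i.e. $\pm b_i\pm b_j$ ($i\ne j$) for the standard basis $b_1,\dots,b_n$. *)

(* Defs.v *)
From HB Require Import structures.
From mathcomp Require Import all_boot all_order all_algebra.
Set Implicit Arguments. Unset Strict Implicit. Unset Printing Implicit Defensive.
Import Order.TTheory GRing.Theory Num.Theory.
Local Open Scope ring_scope.

Definition inD (n : nat) (x : 'rV[int]_n) : Prop :=
  (2 %| \sum_(i < n) x 0 i)%Z.

Definition is_root_Dn (n : nat) (x : 'rV[int]_n) : Prop :=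
  inD x /\ \sum_(i < n) x 0 i ^+ 2 = 2.

Definition in_lattice (m n : nat) (M : 'M[int]_(m, n)) (x : 'rV[int]_n) : Prop :=
  exists c : 'rV[int]_m, x = c *m M.

(* The index [D_n : L] equals k, where L is the lattice spanned by the rows
   of M: there are exactly k cosets of L in D_n, i.e. a list of k elements of
   D_n, pairwise incongruent modulo L, meeting every coset of L in D_n. *)
Definition index_in_Dn (m n : nat) (M : 'M[int]_(m, n)) (k : nat) : Prop :=
  exists s : seq 'rV[int]_n,
    [/\ size s = k,
        (forall x, x \in s -> inD x),
        (forall i j, (i < size s)%N -> (j < size s)%N -> i <> j ->
            ~ in_lattice M (nth 0 s i - nth 0 s j))
      & (forall x, inD x -> exists2 y, y \in s & in_lattice M (x - y))].

Definition rows_lin_indep (m n : nat) (M : 'M[int]_(m, n)) : bool :=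
  row_free (map_mx (fun z : int => (z%:~R : rat)) M).

(* Main.v *)
Require Import Defs.
From HB Require Import structures.
From mathcomp Require Import all_boot all_order all_algebra.
From mathcomp Require Import zify ring lra.
Import Order.TTheory GRing.Theory Num.Theory.

Module Aux.
Set Implicit Arguments. Unset Strict Implicit. Unset Printing Implicit Defensive.
Local Open Scope ring_scope.


Lemma sq_cases (z : int) : z ^+ 2 = 0 \/ z ^+ 2 = 1 \/ 4 <= z ^+ 2.
Proof. rewrite expr2.
have [h|[h|h]] : z = 0 \/ (z = 1 \/ z = -1) \/ (2 <= z \/ z <= -2) by lia.
- by left; rewrite h.
- by right; left; case: h => ->.
- right; right. case: h => h. nia. nia.
Qed.

Lemma sqsum_le (x y : int) : (x+y)^+2 <= 2*(x^+2+y^+2).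
Proof. have := sqr_ge0 (x - y). rewrite sqrrB sqrrD. lia. Qed.

Lemma sum1 n (F : 'I_n -> int) j0 : (forall j, j != j0 -> F j = 0) -> \sum_j F j = F j0.
Proof. by move=> H; rewrite (bigD1 j0) //= big1 ?addr0 // => j /H. Qed.

Lemma sum2 n (F : 'I_n -> int) j0 j1 : j0 != j1 ->
  (forall j, j != j0 -> j != j1 -> F j = 0) -> \sum_j F j = F j0 + F j1.
Proof.
move=> ne H; rewrite (bigD1 j0) //= (bigD1 j1) /= ?big1 ?addr0 // 1?eq_sym //.
by move=> j /andP[h1 h2]; apply: H.
Qed.

Lemma sqsum0 n (P : pred 'I_n) (a : 'I_n -> int) :
  \sum_(j | P j) a j ^+ 2 = 0 -> forall j, P j -> a j = 0.
Proof.
move=> H j Pj.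
have := psumr_eq0P (fun i _ => sqr_ge0 (a i)) H Pj.
by move/eqP; rewrite expf_eq0 /= => /eqP.
Qed.

Lemma sqsum1 n (P : pred 'I_n) (a : 'I_n -> int) :
  \sum_(j | P j) a j ^+ 2 = 1 ->
  exists j0, [/\ P j0, a j0 ^+ 2 = 1 & forall j, P j -> j != j0 -> a j = 0].
Proof.
move=> H.
have [j0 /andP[Pj0 nz]|none] := pickP (fun j => P j && (a j != 0)); last first.
  have : \sum_(j | P j) a j ^+ 2 = 0.
    rewrite big1 // => j Pj; have := none j; rewrite Pj /= => /negbFE/eqP ->.
    by rewrite expr0n.
  by rewrite H.
move: H; rewrite (bigD1 j0) //=.
have rge : 0 <= \sum_(j | P j && (j != j0)) a j ^+ 2 by apply: sumr_ge0 => j _; apply: sqr_ge0.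
have sq : a j0 ^+ 2 != 0 by rewrite expf_eq0.
move=> H.
have [h|[h|h]] := sq_cases (a j0); first by rewrite h eqxx in sq.
- exists j0; split => // j Pj ne.
  have h2 : \sum_(j | P j && (j != j0)) a j ^+ 2 = 0 by move: H; rewrite h -{2}(addr0 1) => /addrI.
  by apply: (sqsum0 h2); rewrite Pj ne.
- exfalso; move: H h rge; set x := a j0 ^+ 2; set y := \sum_(_ | _) _; lia.
Qed.

Lemma sqsum2 n (a : 'I_n -> int) :
  \sum_j a j ^+ 2 = 2 ->
  exists j0 j1, [/\ j0 != j1, a j0 ^+ 2 = 1, a j1 ^+ 2 = 1 &
     forall j, j != j0 -> j != j1 -> a j = 0].
Proof.
move=> H.
have [j0 nz|none] := pickP (fun j => a j != 0); last first.
  have : \sum_j a j ^+ 2 = 0.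
    rewrite big1 // => j _; have := none j; rewrite /= => /negbFE/eqP ->.
    by rewrite expr0n.
  by rewrite H => /eqP.
move: H; rewrite (bigD1 j0) //=.
have rge : 0 <= \sum_(j | j != j0) a j ^+ 2 by apply: sumr_ge0 => j _; apply: sqr_ge0.
have sq : a j0 ^+ 2 != 0 by rewrite expf_eq0.
move=> H.
have [h|[h|h]] := sq_cases (a j0); first by rewrite h eqxx in sq.
- have h2 : \sum_(j | j != j0) a j ^+ 2 = 1.
    by move: H; rewrite h; set y := \sum_(_ | _) _; lia.
  have [j1 [ne1 h1 z1]] := sqsum1 h2.
  exists j0; exists j1; split.
  + by rewrite eq_sym.
  + by [].
  + by [].
  + by move=> j ne0 ne1'; apply: z1.
- exfalso; move: H h rge; set x := a j0 ^+ 2; set y := \sum_(_ | _) _; lia.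
Qed.

Definition rn n (A : 'M[int]_n) i := \sum_j A i j ^+ 2.

Lemma rn_ge0 n (A : 'M[int]_n) i : 0 <= rn A i.
Proof. by apply: sumr_ge0 => j _; apply: sqr_ge0. Qed.

Lemma sum_lift n (F : 'I_n.+1 -> int) j :
  \sum_i F i = F j + \sum_(k < n) F (lift j k).
Proof. by rewrite (bigD1_ord j). Qed.

Definition minor n (A : 'M[int]_n.+1) j : 'M[int]_n := row' 0 (col' j A).

Lemma rn_minor n (A : 'M[int]_n.+1) j k :
  rn (minor A j) k = rn A (lift 0 k) - A (lift 0 k) j ^+ 2.
Proof.
rewrite /rn [in RHS](sum_lift _ j) addrAC subrr add0r; apply: eq_bigr => i _.
by rewrite !mxE.
Qed.

Lemma cof_sq n (A : 'M[int]_n.+1) j :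
  cofactor A 0 j ^+ 2 = \det (minor A j) ^+ 2.
Proof.
by rewrite /cofactor exprMn -exprM mulnC exprM sqrrN !expr1n mul1r.
Qed.

Lemma prod_half n (m R : 'I_n -> int) k : (forall i, 0 <= m i <= R i) ->
  m k + 1 <= R k -> R k <= 2 -> 2 * \prod_i m i <= \prod_i R i.
Proof.
move=> H hk hR; rewrite (bigD1 k) //= [X in _ <= X](bigD1 k) //=.
have hp : \prod_(i | i != k) m i <= \prod_(i | i != k) R i.
  by apply: ler_prod => i _; apply: H.
have hp0 : 0 <= \prod_(i | i != k) m i.
  by apply: prodr_ge0 => i _; case/andP: (H i).
have := H k; move: hp hp0.
set x := \prod_(_ | _) m _; set y := \prod_(_ | _) R _.
move=> hp hp0 /andP[h1 h2]; nia.
Qed.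

Lemma hadamard n (A : 'M[int]_n) :
  (forall i, rn A i <= 2) -> \det A ^+ 2 <= \prod_i rn A i.
Proof.
elim: n A => [|n IH] A HA; first by rewrite det_mx00 big_ord0 expr1n.
set P' := \prod_(k < n) rn A (lift 0 k).
have eP : \prod_i rn A i = rn A 0 * P' by rewrite big_ord_recl.
have P'0 : 0 <= P' by apply: prodr_ge0 => k _; apply: rn_ge0.
have mb : forall j, \det (minor A j) ^+ 2 <= \prod_k rn (minor A j) k.
  move=> j; apply: IH => k; rewrite rn_minor.
  have := HA (lift 0 k); have := sqr_ge0 (A (lift 0 k) j).
  set x := rn _ _; set y := _ ^+ 2; lia.
have mleP : forall j, \prod_k rn (minor A j) k <= P'.
  move=> j; apply: ler_prod => k _; rewrite rn_ge0 /= rn_minor.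
  have := sqr_ge0 (A (lift 0 k) j); set x := rn _ _; set y := _ ^+ 2; lia.
have mhalf : forall j, (exists k, A (lift 0 k) j != 0) ->
    2 * \det (minor A j) ^+ 2 <= P'.
  move=> j [k nz].
  have hh : 2 * \prod_k rn (minor A j) k <= P'.
    apply: (@prod_half _ (fun k => rn (minor A j) k) (fun k => rn A (lift 0 k)) k).
    - move=> i; rewrite rn_ge0 /= rn_minor.
      have := sqr_ge0 (A (lift 0 i) j); set x := rn _ _; set y := _ ^+ 2; lia.
    - rewrite /= rn_minor.
      have sq : A (lift 0 k) j ^+ 2 != 0 by rewrite expf_eq0.
      have := HA (lift 0 k).
      have [h|[h|h]] := sq_cases (A (lift 0 k) j); first by rewrite h eqxx in sq.
      + rewrite h; set x := rn _ _; lia.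
      + move: h; set x := rn _ _; set y := _ ^+ 2; lia.
    - exact: HA.
  have := mb j; move: hh; set x := \det _ ^+ 2; set y := \prod_(_ < _) _; lia.
have colz : forall j, (forall k, A (lift 0 k) j = 0) ->
    \det A ^+ 2 = A 0 j ^+ 2 * \det (minor A j) ^+ 2.
  move=> j z; rewrite (expand_det_col A j) (@sum1 _ _ 0); first by rewrite exprMn cof_sq.
  move=> i; case: (unliftP 0 i) => [k ->|->]; first by rewrite z mul0r.
  by rewrite eqxx.
have rowexp := expand_det_row A 0.
have : rn A 0 = 0 \/ rn A 0 = 1 \/ rn A 0 = 2.
  by have := HA 0; have := rn_ge0 A 0; set x := rn _ _; lia.
case=> [r0|[r1|r2]].
- have z : forall j, A 0 j = 0 by move=> j; apply: (sqsum0 r0).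
  rewrite rowexp big1 ?expr0n /= ?eP ?r0 ?mul0r //.
  by move=> j _; rewrite z mul0r.
- have [j0 [_ h z]] := sqsum1 r1.
  rewrite rowexp (@sum1 _ _ j0).
    rewrite exprMn h mul1r cof_sq eP r1 mul1r.
    exact: le_trans (mb j0) (mleP j0).
  by move=> j ne; rewrite z ?mul0r.
- have [j0 [j1 [ne h0 h1 z]]] := sqsum2 r2.
  rewrite eP r2.
  have P'2 : P' <= 2 * P' by set x := P'; lia.
  case: (pickP (fun k => A (lift 0 k) j0 != 0)) => [k0 nz0|n0]; last first.
    rewrite (colz j0) ?h0 ?mul1r; first exact: le_trans (le_trans (mb j0) (mleP j0)) P'2.
    by move=> k; have := n0 k => /negbFE/eqP.
  case: (pickP (fun k => A (lift 0 k) j1 != 0)) => [k1 nz1|n1]; last first.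
    rewrite (colz j1) ?h1 ?mul1r; first exact: le_trans (le_trans (mb j1) (mleP j1)) P'2.
    by move=> k; have := n1 k => /negbFE/eqP.
  rewrite rowexp (sum2 ne); last by move=> j a b; rewrite z ?mul0r.
  apply: le_trans (sqsum_le _ _) _.
  rewrite exprMn h0 mul1r cof_sq exprMn h1 mul1r cof_sq.
  have := mhalf j0 (ex_intro _ k0 nz0); have := mhalf j1 (ex_intro _ k1 nz1).
  set x := \det (minor A j0) ^+ 2; set y := \det (minor A j1) ^+ 2.
  move: P'0; set p := P'; lia.
Qed.



Lemma liftne0 n (k : 'I_n) : (lift 0 k == 0 :> 'I_n.+1) = false.
Proof. by rewrite eq_sym (negbTE (neq_lift _ _)). Qed.
Lemma zne_lift n (k : 'I_n) : (0 == lift 0 k :> 'I_n.+1) = false.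
Proof. by rewrite (negbTE (neq_lift _ _)). Qed.

Definition Bm n : 'M[int]_n.+1 :=
  \matrix_(i, j) (if i == 0 then (j == 0)%:R * 2 else (j == i)%:R - (j == 0)%:R).

Definition coef n (x : 'rV[int]_n.+1) : 'rV[int]_n.+1 :=
  \row_i (if i == 0 then ((\sum_j x 0 j) %/ 2)%Z else x 0 i).

Lemma coefK n (x : 'rV[int]_n.+1) : inD x -> coef x *m Bm n = x.
Proof.
rewrite /inD => hx; apply/rowP => j; rewrite !mxE big_ord_recl !mxE /=.
have eS : \sum_j x 0 j = x 0 0 + \sum_(k < n) x 0 (lift 0 k) by rewrite big_ord_recl.
case: (unliftP 0 j) => [k0 ->|->].
- rewrite ?liftne0 ?zne_lift mul0r mulr0 add0r.
  rewrite (@sum1 _ _ k0).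
    by rewrite !mxE ?liftne0 ?zne_lift eqxx /= subr0 mulr1.
  move=> k ne; rewrite !mxE ?liftne0 ?zne_lift /= (inj_eq (@lift_inj _ 0)).
  by rewrite eq_sym (negbTE ne) subr0 mulr0.
- rewrite eqxx (_ : true%:R = 1 :> int) // mul1r divzK //.
  have -> : \sum_(i < n) (coef x) 0 (lift 0 i) * (Bm n) (lift 0 i) 0
            = - \sum_(k < n) x 0 (lift 0 k).
    rewrite -sumrN; apply: eq_bigr => k _; rewrite !mxE ?liftne0 ?zne_lift /=.
    by rewrite sub0r mulrN1.
  by rewrite eS addrK.
Qed.

Lemma inD_mul n (a : 'rV[int]_n.+1) : inD (a *m Bm n).
Proof.
rewrite /inD.
have -> : \sum_j (a *m Bm n) 0 j = a 0 0 * 2.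
  under eq_bigr do rewrite mxE.
  rewrite exchange_big /= big_ord_recl.
  have e1 : \sum_(j < n.+1) a 0 0 * Bm n 0 j = a 0 0 * 2.
    rewrite -mulr_sumr (@sum1 _ _ 0) ?mxE ?eqxx ?mul1r //.
    by move=> j ne; rewrite mxE eqxx (negbTE ne) mul0r.
  rewrite e1 big1 ?addr0 // => k _.
  rewrite -mulr_sumr; apply/eqP; rewrite mulf_eq0; apply/orP; right.
  rewrite (eq_bigr (fun j => (j == lift 0 k)%:R - (j == 0)%:R)); last first.
    by move=> j _; rewrite mxE liftne0.
  rewrite sumrB (@sum1 _ _ (lift 0 k)); last by move=> j /negbTE ->.
  by rewrite (@sum1 _ _ 0) ?eqxx ?subrr // => j /negbTE ->.
by apply: dvdz_mull.
Qed.

Lemma inD_iff n (x : 'rV[int]_n.+1) : inD x <-> exists a, x = a *m Bm n.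
Proof.
split; first by move=> h; exists (coef x); rewrite coefK.
by case=> a ->; apply: inD_mul.
Qed.

Lemma det_Bm n : \det (Bm n) = 2.
Proof.
rewrite det_trig.
  rewrite big_ord_recl !mxE eqxx mul1r big1 ?mulr1 // => k _.
  by rewrite !mxE ?liftne0 ?zne_lift eqxx /= subr0.
apply/is_trig_mxP => i j lt; rewrite mxE.
have nj0 : (j == 0) = false by apply/eqP => e; move: lt; rewrite e ltn0.
have nji : (j == i) = false by apply/eqP => e; move: lt; rewrite e ltnn.
by rewrite nj0 nji; case: ifP => _; rewrite ?mul0r ?subrr.
Qed.

Lemma Bm_cancel n (a b : 'rV[int]_n.+1) : a *m Bm n = b *m Bm n -> a = b.
Proof.
move=> e; have := congr1 (fun m => m *m \adj (Bm n)) e.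
rewrite -!mulmxA mul_mx_adj det_Bm !mul_mx_scalar => /matrixP h.
apply/matrixP => i j; have := h i j; rewrite !mxE.
by move/(mulfI _); apply.
Qed.



Lemma small_div (x y : nat) (e dl : int) : dl != 0 ->
  (x < `|dl|)%N -> (y < `|dl|)%N -> x%:Z - y%:Z = e * dl -> x = y.
Proof.
move=> nz hx hy h.
have hx' : (x%:Z < `|dl|) by rewrite -abszE ltz_nat.
have hy' : (y%:Z < `|dl|) by rewrite -abszE ltz_nat.
have [dp|dn] := ltrP 0 dl.
- rewrite gtr0_norm // in hx' hy'.
  have : e = 0 by nia.
  by move=> e0; move: h; rewrite e0 mul0r; lia.
- have dn' : dl < 0 by rewrite lt_neqAle nz dn.
  rewrite ltr0_norm // in hx' hy'.
  have : e = 0 by nia.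
  by move=> e0; move: h; rewrite e0 mul0r; lia.
Qed.

Lemma unit_abs n (U : 'M[int]_n) : U \in unitmx -> `|\det U|%N = 1%N.
Proof.
rewrite unitmxE => h.
have : (\det U == 1) || (\det U == -1) := h.
by case/orP => /eqP ->.
Qed.

Lemma index_C n (C : 'M[int]_n.+1) :
  \det C != 0 -> index_in_Dn (C *m Bm n) `|\det C|%N.
Proof.
move=> nz.
have [P uP [Q uQ [d _ eC]]] := int_Smith_normal_form C.
set D := \matrix_(i, j) _ in eC.
have eD : D = diag_mx (\row_i d`_i) by apply/matrixP => i j; rewrite !mxE.
rewrite eD {eD D} in eC.
have detC : \det C = \det P * (\prod_(i < n.+1) d`_i) * \det Q.
  rewrite eC !det_mulmx det_diag; congr (_ * _ * _).
  by apply: eq_bigr => i _; rewrite mxE.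
have dnz : forall i : 'I_n.+1, d`_i != 0.
  move=> i; apply: contra nz => /eqP z.
  by rewrite detC (bigD1 i) //= z mul0r mulr0 mul0r.
pose T := {dffun forall i : 'I_n.+1, 'I_(absz (d`_i))}.
pose vec (t : T) : 'rV[int]_n.+1 := \row_i ((t i : nat)%:Z).
pose f (t : T) := (vec t *m Q) *m Bm n.
have key : forall t t' (c : 'rV_n.+1), f t - f t' = c *m (C *m Bm n) -> t = t'.
  move=> t t' c e.
  have e1 : (vec t - vec t') *m Q = c *m C.
    have ee : f t - f t' = ((vec t - vec t') *m Q) *m Bm n by rewrite /f !mulmxBl.
    by apply: Bm_cancel; rewrite -ee e mulmxA.
  have e2 : vec t - vec t' = (c *m P) *m diag_mx (\row_i d`_i).
    have := congr1 (mulmx^~ (invmx Q)) e1.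
    by rewrite /= mulmxK // eC !mulmxA mulmxK.
  apply/ffunP => i; apply: val_inj => /=.
  have := congr1 (fun m : 'rV[int]_n.+1 => m 0 i) e2; rewrite mul_mx_diag !mxE.
  by apply: small_div (dnz i) _ _.
pose s := [seq f t | t <- enum T].
have uniq_s : uniq s.
  rewrite map_inj_in_uniq ?enum_uniq // => t t' _ _ e.
  by apply: (key t t' 0); rewrite e subrr mul0mx.
exists s; split.
- rewrite size_map -cardE card_dep_ffun foldrE big_map big_enum /=.
  rewrite detC !abszM (unit_abs uP) (unit_abs uQ) mul1n muln1.
  rewrite (big_morph (fun z : int => `|z|%N) abszM (erefl _)).
  by apply: eq_big => // i; rewrite card_ord.
- by move=> x /mapP [t _ ->]; apply: inD_mul.
- move=> i j hi hj ne [c hc].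
  have [ti _ ei] := mapP (mem_nth 0 hi).
  have [tj _ ej] := mapP (mem_nth 0 hj).
  rewrite ei ej in hc.
  have := key _ _ _ hc => eij.
  apply: ne; apply/eqP; rewrite -(nth_uniq 0 hi hj uniq_s) ei ej eij //.
- move=> x hx.
  pose a := coef x.
  have ha : a *m Bm n = x by apply: coefK.
  have [w ew0] : {w : 'rV[int]_n.+1 | w = a *m invmx Q} by exists (a *m invmx Q).
  pose v : 'rV[int]_n.+1 := \row_(i < n.+1) ((w ord0 i %% d`_i)%Z).
  pose u : 'rV[int]_n.+1 := \row_(i < n.+1) ((w ord0 i %/ d`_i)%Z).
  have hv0 : forall i, 0 <= v 0 i by move=> i; rewrite mxE modz_ge0.
  have hvi : forall i : 'I_n.+1, leq (absz (v ord0 i)).+1 (absz (d`_i)).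
    move=> i; rewrite -ltz_nat !abszE ger0_norm ?hv0 // mxE.
    exact: ltz_mod.
  pose t : T := finfun (fun i => Ordinal (hvi i)).
  have vt : vec t = v by apply/rowP => i; rewrite [LHS]mxE ffunE /= gez0_abs //; apply: hv0.
  have ew : w - v = u *m diag_mx (\row_i d`_i).
    apply/rowP => i; rewrite mul_mx_diag !mxE.
    rewrite (_ : w 0 i = w ord0 i) //.
    by rewrite {1}(divz_eq (w ord0 i) d`_i) addrK.
  have ea : a = w *m Q by rewrite ew0 mulmxKV.
  exists (f t); first by apply: map_f; rewrite mem_enum.
  exists (u *m invmx P).
  rewrite -ha ea /f vt -mulmxBl -mulmxBl ew.
  by rewrite eC !mulmxA mulmxKV.
Qed.



Lemma index_det n (M : 'M[int]_n) : (0 < n)%N -> (forall i, inD (row i M)) ->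
  \det M != 0 -> exists k : nat, index_in_Dn M k /\ (k * 2)%N = absz (\det M).
Proof.
case: n M => [//|n] M _ hM nz.
pose C := \matrix_i coef (row i M).
have eM : C *m Bm n = M by apply/row_matrixP => i; rewrite row_mul rowK coefK.
have dM : \det M = \det C * 2 by rewrite -eM det_mulmx det_Bm.
exists (absz (\det C)); split; last by rewrite dM abszM.
rewrite -eM; apply: index_C.
by apply: contra nz; rewrite dM => /eqP ->; rewrite mul0r.
Qed.

Lemma absz_sq (z : int) : ((absz z ^ 2)%N : int) = z ^+ 2.
Proof. by rewrite -natz natrX natz abszE real_normK ?num_real. Qed.

Lemma pow_int (m e : nat) : ((m ^ e)%N : int) = (m : int) ^+ e.
Proof. by rewrite -[LHS]natz natrX natz. Qed.

Lemma det_ne0_indep n (M : 'M[int]_n) : \det M != 0 -> rows_lin_indep M.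
Proof.
move=> nz; rewrite /rows_lin_indep row_free_unit unitmxE unitfE det_map_mx.
by rewrite intr_eq0.
Qed.

Lemma indep_det_ne0 n (M : 'M[int]_n) : rows_lin_indep M -> \det M != 0.
Proof.
by rewrite /rows_lin_indep row_free_unit unitmxE unitfE det_map_mx intr_eq0.
Qed.

Definition sgn (i : nat) : int := if odd i then -1 else 1.

Definition M0 d : 'M[int]_(2 * d) :=
  \matrix_(i, j) (if (j./2 == i./2)%N then (if odd i && odd j then -1 else 1) else 0).

Lemma half_eq (i j : nat) : (j./2 == i./2)%N -> j = (i./2).*2 \/ j = (i./2).*2.+1.
Proof. by move=> /eqP; rewrite -!divn2 -muln2; lia. Qed.

Lemma M0_supp d (i : 'I_(2 * d)) : exists j0 j1 : 'I_(2 * d),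
  [/\ j0 != j1, (j0 : nat) = (i./2).*2, (j1 : nat) = (i./2).*2.+1 &
   forall j : 'I_(2 * d), j != j0 -> j != j1 -> (j./2 != i./2)%N].
Proof.
have hi := ltn_ord i.
have h1 : ((i./2).*2 < 2 * d)%N by move: hi; rewrite -divn2 -muln2; lia.
have h2 : ((i./2).*2.+1 < 2 * d)%N by move: hi; rewrite -divn2 -muln2; lia.
exists (Ordinal h1), (Ordinal h2); split => //.
- apply/eqP => e; have := congr1 (@nat_of_ord _) e; rewrite /=; lia.
- move=> j n0 n1; apply/negP => e.
  case: (half_eq e) => e'.
  + by move/eqP: n0; apply; apply: val_inj.
  + by move/eqP: n1; apply; apply: val_inj.
Qed.

Lemma M0E d (i j : 'I_(2 * d)) : M0 d i j =
  if (j./2 == i./2)%N then (if odd i && odd j then -1 else 1) else 0.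
Proof. by rewrite mxE. Qed.

Lemma M0_row d (i : 'I_(2 * d)) : is_root_Dn (row i (M0 d)).
Proof.
have [j0 [j1 [ne v0 v1 z]]] := M0_supp i.
have zi : forall j, j != j0 -> j != j1 -> M0 d i j = 0.
  by move=> j a b; rewrite M0E (negbTE (z j a b)).
have e0 : (if (j0./2 == i./2)%N then (if odd i && odd j0 then -1 else 1) else 0) = 1 :> int.
  by rewrite v0 doubleK eqxx odd_double andbF.
have e1 : (if (j1./2 == i./2)%N then (if odd i && odd j1 then -1 else 1) else 0) = sgn i.
  by rewrite v1 /= uphalf_double eqxx /= odd_double andbT /sgn.
split.
- rewrite /inD (sum2 ne); last by move=> j a b; rewrite mxE zi.
  rewrite !mxE e0 e1 /sgn; case: (odd i) => //=.
- rewrite (sum2 ne); last by move=> j a b; rewrite mxE zi // expr0n.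
  by rewrite !mxE e0 e1 /sgn; case: (odd i).
Qed.

Lemma M0_gram d : M0 d *m (M0 d)^T = 2%:M.
Proof.
apply/matrixP => i k; rewrite !mxE.
have [j0 [j1 [ne v0 v1 z]]] := M0_supp i.
rewrite (sum2 ne); last first.
  by move=> j a b; rewrite !mxE (negbTE (z j a b)) mul0r.
rewrite !mxE v0 v1 /= doubleK uphalf_double eqxx odd_double /= andbF andbT.
case: (eqVneq (i./2) (k./2)) => hk.
- case: (eqVneq i k) => [->|nik].
  + by case: (odd k).
  + have ho : odd k = ~~ odd i.
      have hi := odd_double_half i; have hk2 := odd_double_half k.
      have nik' : (i : nat) != k by [].
      move: hk hi hk2 nik'; rewrite -!divn2 -!muln2.
      by case: (odd i); case: (odd k) => /= hk hi hk2 nik'; lia.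
    by rewrite ho; case: (odd i).
- have nik : (i == k) = false by apply/eqP => e; rewrite e eqxx in hk.
  by rewrite nik !mulr0 addr0.
Qed.

End Aux.
Import Aux.
Unset Implicit Arguments.

Theorem proposition15p2 (d : nat) (hd : (1 <= d)%N) :
  (forall M : 'M[int]_(2 * d),
      (forall i, is_root_Dn (row i M)) -> rows_lin_indep M ->
      exists k : nat, index_in_Dn M k /\ (k <= 2 ^ (d - 1))%N)
  /\
  (exists M : 'M[int]_(2 * d),
      [/\ (forall i, is_root_Dn (row i M)), rows_lin_indep M
        & index_in_Dn M (2 ^ (d - 1))]).
Proof.
Local Open Scope ring_scope.
have pos : (0 < 2 * d)%N by lia.
have e2d : (2 ^ d = 2 ^ (d - 1) * 2)%N by rewrite -expnSr; have -> : (d - 1).+1 = d by lia.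
split.
- move=> M hr hli.
  have nz := indep_det_ne0 hli.
  have [k [hk ek]] := index_det pos (fun i => (hr i).1) nz.
  exists k; split => //.
  have hrn : forall i, rn M i = 2.
    move=> i; apply: etrans _ (hr i).2; apply: eq_bigr => j _; by rewrite mxE.
  have hb : \det M ^+ 2 <= 2 ^+ (2 * d).
    have hle : forall i, rn M i <= 2 by move=> i; rewrite hrn.
    have := hadamard hle.
    by rewrite (eq_bigr (fun _ => 2)) // prodr_const card_ord.
  have : (absz (\det M) ^ 2 <= (2 ^ d) ^ 2)%N.
    by rewrite -lez_nat absz_sq pow_int pow_int -exprM [(d * 2)%N]mulnC.
  rewrite leq_exp2r // -ek e2d leq_pmul2r //.
- exists (M0 d).
  have g := M0_gram d.
  have hdet : \det (M0 d) ^+ 2 = 2 ^+ (2 * d).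
    have := congr1 determinant g; rewrite det_mulmx det_tr det_scalar => <-.
    by rewrite expr2.
  have nz : \det (M0 d) != 0.
    have : (2 : int) ^+ (2 * d) != 0 by rewrite expf_neq0.
    by apply: contra => /eqP e; rewrite -hdet e expr0n.
  have [k [hk ek]] := index_det pos (fun i => (M0_row i).1) nz.
  have ab : absz (\det (M0 d)) = (2 ^ d)%N.
    apply/eqP; rewrite -(@eqn_exp2r _ _ 2) // -eqz_nat absz_sq hdet.
    by rewrite pow_int pow_int -exprM [(d * 2)%N]mulnC.
  have -> : (2 ^ (d - 1) = k)%N.
    by move: ek; rewrite ab e2d => /eqP; rewrite eqn_pmul2r // => /eqP.
  split => //; [exact: (fun i => M0_row i) | exact: det_ne0_indep].
Qed.
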